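(* Let $G$ be a graph with degree sequence $(d_1, \ldots, d_n)$, where $d_1 \geq d_2 \geq \cdots \geq d_n$. Let $\Sigma$ be a signed graph with underlying graph $G$. Then $$l(\Sigma) \leq \sum_{i=1}^{l_0(\Sigma)} \left\lfloor \frac{d_i}{2} \right\rfloor.$$
   Context: A signed graph $\Sigma = (G,\sigma)$ consists of a finite graph $G$ (loops and multiple edges allowed) and a sign function $\sigma: E(G) \to \{+1,-1\}$. A circle is a connected nonempty $2$-regular subgraph; it is positive if the product of the signs of its edges is $+1$ and negative otherwise. $\Sigma$ is balanced if all its circles are positive. The frustration index $l(\Sigma)$ is the smallest number of edges whose deletion from $\Sigma$ leaves a balanced signed graph. The frustration number $l_0(\Sigma)$ is the smallest number of vertices whose deletion (together with all incident edges) from $\Sigma$ leaves a balanced signed graph. *)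

(* Defs.v *)
From mathcomp Require Import all_boot.
Set Implicit Arguments. Unset Strict Implicit. Unset Printing Implicit Defensive.

(* A signed graph with vertex set V, edge set E (loops and multiple edges
   allowed): each edge e has a pair of endpoints [ends e] (a loop has equal
   endpoints) and a sign; [neg e = true] means sigma(e) = -1. *)
Section SignedGraph.
Variables (V E : finType) (ends : E -> V * V) (neg : E -> bool).

Definition inc (e : E) (v : V) : nat := ((ends e).1 == v) + ((ends e).2 == v).

Definition deg_in (F : {set E}) (v : V) : nat := \sum_(e in F) inc e v.

Definition deg (v : V) : nat := deg_in [set: E] v.

Definition touches (C : {set E}) (v : V) : bool := [exists e in C, inc e v != 0].

Definition adj_in (C : {set E}) : rel V :=
  fun u w => [exists e in C, (ends e == (u, w)) || (ends e == (w, u))].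

Definition is_circle (C : {set E}) : bool :=
  [&& C != set0,
      [forall v, touches C v ==> (deg_in C v == 2)] &
      [forall u, forall w, touches C u ==> touches C w ==> connect (adj_in C) u w]].

Definition positive (C : {set E}) : bool := ~~ odd #|[set e in C | neg e]|.

Definition balanced_on (F : {set E}) : bool :=
  [forall C : {set E}, (C \subset F) ==> is_circle C ==> positive C].

Definition edges_avoiding (X : {set V}) : {set E} :=
  [set e | ((ends e).1 \notin X) && ((ends e).2 \notin X)].

Definition frustration_index : nat :=
  \big[minn/#|E|]_(S : {set E} | balanced_on (~: S)) #|S|.

Definition frustration_number : nat :=
  \big[minn/#|V|]_(X : {set V} | balanced_on (edges_avoiding X)) #|X|.

Definition degree_seq : seq nat := sort geq [seq deg v | v <- enum V].

End SignedGraph.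

(* Main.v *)
Require Import Defs.
From mathcomp Require Import all_boot.
Set Implicit Arguments. Unset Strict Implicit. Unset Printing Implicit Defensive.

Definition cons_on (V E : finType) (ends : E -> V * V) (neg : E -> bool)
  (s : V -> bool) (F : {set E}) :=
  forall e, e \in F -> neg e = (s (ends e).1 != s (ends e).2).

Lemma card_neg (E : finType) (neg : E -> bool) (C : {set E}) :
  #|[set e in C | neg e]| = \sum_(e in C) (neg e : nat).
Proof.
rewrite -sum1_card big_mkcond /= [RHS]big_mkcond /=.
apply: eq_bigr => e _; rewrite inE; by case: (e \in C); case: (neg e).
Qed.

Lemma sum_ind (V : finType) (s : V -> bool) (a : V) :
  \sum_(v : V) (s v * (a == v)) = s a.
Proof.
rewrite (bigD1 a) //= eqxx muln1 big1 ?addn0 // => v /negbTE.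
by rewrite eq_sym => ->; rewrite muln0.
Qed.

Lemma cons_balanced (V E : finType) (ends : E -> V * V) (neg : E -> bool)
  (s : V -> bool) (F : {set E}) : cons_on ends neg s F -> balanced_on ends neg F.
Proof.
move=> cs; apply/forallP => C; apply/implyP => sub; apply/implyP => /and3P [_ /forallP reg _].
rewrite /positive card_neg.
have degev : forall v, ~~ odd (deg_in ends C v).
  move=> v; have := reg v; case: (boolP (touches ends C v)) => /= [_ /eqP -> //|].
  move=> nt _; rewrite /deg_in big1 // => e eC; apply/eqP; apply: contraNT nt => ne.
  by apply/existsP; exists e; rewrite eC.
have key : \sum_(e in C) (neg e : nat) + 2 * \sum_(e in C) (s (ends e).1 && s (ends e).2 : nat)
   = \sum_(v : V) s v * deg_in ends C v.
  rewrite big_distrr -big_split /=.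
  under [RHS]eq_bigr => v _ do rewrite /deg_in big_distrr.
  rewrite exchange_big /=; apply: eq_bigr => e eC.
  rewrite /inc; under eq_bigr => v _ do rewrite mulnDr.
  rewrite big_split /= !sum_ind (cs e (subsetP sub e eC)).
  by case: (s (ends e).1); case: (s (ends e).2).
have : ~~ odd (\sum_(v : V) s v * deg_in ends C v).
  elim/big_rec: _ => // v x _ ih; rewrite oddD oddM (negbTE (degev v)) andbF.
  by rewrite (negbTE ih).
by rewrite -key oddD oddM /= addbF.
Qed.

Definition edge_for (V E : finType) (ends : E -> V * V) (F : {set E}) (e : E) (a b : V) :=
  odflt e [pick e0 in F | (ends e0 == (a, b)) || (ends e0 == (b, a))].

Lemma edge_forP (V E : finType) (ends : E -> V * V) (F : {set E}) (e : E) (a b : V) :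
  adj_in ends F a b ->
  edge_for ends F e a b \in F /\
  ((ends (edge_for ends F e a b) == (a, b)) || (ends (edge_for ends F e a b) == (b, a))).
Proof.
move=> /existsP [x /andP [xF hx]]; rewrite /edge_for.
case: pickP => [y /andP [yF hy] | /(_ x)]; first by [].
by rewrite xF hx.
Qed.

Lemma inc_ab (V E : finType) (ends : E -> V * V) (x : E) (a b v : V) :
  (ends x == (a, b)) || (ends x == (b, a)) -> inc ends x v = (a == v) + (b == v).
Proof. by rewrite /inc => /orP [] /eqP -> //=; rewrite addnC. Qed.


Lemma es_props (V E : finType) (ends : E -> V * V) (neg : E -> bool) (F : {set E})
  (e : E) (s : V -> bool) (u : V) (p : seq V) :
  path (adj_in ends F) u p ->
  [/\ {subset pairmap (edge_for ends F e) u p <= F},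
      forall x, x \in pairmap (edge_for ends F e) u p -> ((ends x).1 \in u :: p) && ((ends x).2 \in u :: p),
      uniq (u :: p) -> uniq (pairmap (edge_for ends F e) u p),
      forall v, \sum_(x <- pairmap (edge_for ends F e) u p) inc ends x v + (last u p == v) = count_mem v (u :: p) + count_mem v p
    & cons_on ends neg s F -> odd (\sum_(x <- pairmap (edge_for ends F e) u p) neg x) = (s u != s (last u p))].
Proof.
elim: p u => [|y p IH] u /=.
  move=> _; split => //.
    by move=> v; rewrite big_nil !addn0.
  by move=> _; rewrite big_nil eqxx.
case/andP => auy pp; have [i1 i2 i3 i4 i5] := IH y pp.
have [fF fe] := edge_forP e auy.
set f := edge_for ends F e u y.
split.
- by move=> x; rewrite inE => /orP [/eqP -> | /i1].
- move=> x; rewrite inE => /orP [/eqP -> | /i2].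
    by case/orP: fe => /eqP -> /=; rewrite !inE !eqxx ?orbT.
  by rewrite !inE => /andP [-> ->]; rewrite !orbT.
- move=> /andP [un /i3 ues]; rewrite ues andbT; apply/negP => /i2.
  rewrite /=; case/orP: fe => /eqP -> /= /andP [h1 h2]; move: un; rewrite ?h1 ?h2 //.
- move=> v; rewrite big_cons (inc_ab v fe) -addnA i4 /=.
  by rewrite !addnA; congr (_ + _); rewrite addnAC.
- move=> cs; rewrite big_cons oddD i5 // (cs _ fF).
  by case/orP: fe => /eqP -> /=; case: (s u); case: (s y); case: (s (last y p)).
Qed.

Lemma adj_sym (V E : finType) (ends : E -> V * V) (C : {set E}) :
  symmetric (adj_in ends C).
Proof.
move=> a b; rewrite /adj_in; apply: eq_existsb => x; by rewrite orbC.
Qed.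

Lemma touches_deg (V E : finType) (ends : E -> V * V) (C : {set E}) v :
  touches ends C v -> 0 < deg_in ends C v.
Proof.
case/existsP => x /andP [xC nz]; rewrite /deg_in (bigD1 x) //=.
by rewrite lt0n addn_eq0 negb_and nz.
Qed.

Lemma path_lift (V E : finType) (ends : E -> V * V) (F C : {set E}) (e : E) u p :
  path (adj_in ends F) u p -> {subset pairmap (edge_for ends F e) u p <= C} ->
  path (adj_in ends C) u p.
Proof.
elim: p u => [|y p IH] u //= /andP [auy pp] sub.
have [_ fe] := edge_forP e auy.
rewrite IH //; last by move=> x xin; apply: sub; rewrite inE xin orbT.
rewrite andbT; apply/existsP; exists (edge_for ends F e u y).
by rewrite fe sub // mem_head.
Qed.

Lemma balanced_sub (V E : finType) (ends : E -> V * V) (neg : E -> bool) (F G : {set E}) :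
  balanced_on ends neg F -> G \subset F -> balanced_on ends neg G.
Proof.
move=> /forallP bF GF; apply/forallP => C; apply/implyP => CG.
by have /implyP := bF C; apply; apply: subset_trans GF.
Qed.

Lemma neg_circle (V E : finType) (ends : E -> V * V) (neg : E -> bool) (F : {set E})
  (e : E) (s : V -> bool) u w :
  ends e = (u, w) -> e \notin F -> cons_on ends neg s F ->
  connect (adj_in ends F) u w -> neg e != (s u != s w) ->
  ~~ balanced_on ends neg (e |: F).
Proof.
move=> he eF cs /connectP [p0 pth0 wE] ne; subst w.
move: he ne; case: (shortenP pth0) => p pth un _ he ne.
have [i1 i2 i3 i4 i5] := es_props neg e s pth.
set es := pairmap (edge_for ends F e) u p.
have ues : uniq (e :: es).
  rewrite /= i3 // andbT; apply/negP => /i1; by rewrite (negbTE eF).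
set C := [set x | x \in e :: es].
have sumC : forall G : E -> nat, \sum_(x in C) G x = \sum_(x <- e :: es) G x.
  by move=> G; rewrite big_uniq //; apply: eq_bigl => x; rewrite inE.
have degC : forall v, deg_in ends C v = (u == v) + count_mem v (u :: p) + count_mem v p.
  by move=> v; rewrite /deg_in sumC big_cons {1}/inc he /= addnAC -addnA i4 addnA.
move: un => /= /andP [up upn].
have deg02 : forall v, deg_in ends C v = if v \in u :: p then 2 else 0.
  move=> v; rewrite degC /= (count_uniq_mem _ upn) inE.
  case: (eqVneq u v) => [<-|uv]; first by rewrite (negbTE up).
  by case: (v \in p).
have pthC : path (adj_in ends C) u p.
  by apply: (path_lift (e := e)) pth _ => x xin; rewrite inE in_cons xin orbT.
have circ : is_circle ends C.
  apply/and3P; split.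
  - by apply/set0Pn; exists e; rewrite inE mem_head.
  - apply/forallP => v; apply/implyP => /touches_deg; rewrite deg02.
    by case: (v \in u :: p).
  - apply/forallP => a; apply/forallP => b; apply/implyP => /touches_deg ta.
    apply/implyP => /touches_deg tb.
    have inp : forall c, 0 < deg_in ends C c -> connect (adj_in ends C) u c.
      move=> c; rewrite deg02; case: ifP => // cin _.
      exact: (path_connect pthC).
    apply: (connect_trans (y := u)); last exact: inp.
    by rewrite (sym_connect_sym (adj_sym ends C)); apply: inp.
apply/negP => /forallP /(_ C) /implyP H.
have sub : C \subset e |: F.
  apply/subsetP => x; rewrite !inE => /orP [->//| /i1 ->]; by rewrite orbT.
move: (implyP (H sub) circ); rewrite /positive card_neg sumC big_cons oddD i5 //.
by move: (neg e) (s u != s (last u p)) ne => [] [].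
Qed.

Lemma harary (V E : finType) (ends : E -> V * V) (neg : E -> bool) (F : {set E}) :
  balanced_on ends neg F -> exists s, cons_on ends neg s F.
Proof.
move: {2}#|F| (leqnn #|F|) => n; elim: n F => [|n IH] F.
  rewrite leqn0 cards_eq0 => /eqP -> _; by exists (fun _ => false) => e; rewrite inE.
case: (set_0Vmem F) => [-> _ _|[e eF] szF bF].
  by exists (fun _ => false) => e; rewrite inE.
set F' := F :\ e.
have szF' : #|F'| <= n by move: szF; rewrite (cardsD1 e F) eF.
have bF' : balanced_on ends neg F' by apply: balanced_sub bF (subsetDl _ _).
have [s cs] := IH F' szF' bF'.
case he : (ends e) => [u w].
have Fsplit : forall x, x \in F -> x = e \/ x \in F'.
  by move=> x xF; case: (eqVneq x e) => [->|xe]; [left | right; rewrite !inE xe].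
case: (eqVneq (neg e) (s u != s w)) => [ok | bad].
  exists s => x /Fsplit [-> | /cs //]; by rewrite he.
case: (boolP (connect (adj_in ends F') u w)) => [cn | ncn].
  have eF'' : e \notin F' by rewrite !inE eqxx.
  have := neg_circle he eF'' cs cn bad.
  by rewrite /F' setD1K // bF.
exists (fun v => s v (+) connect (adj_in ends F') u v) => x /Fsplit [-> | xF'].
  rewrite he /= connect0 (negbTE ncn) addbF.
  by move: bad; case: (neg e); case: (s u); case: (s w).
have adjx : adj_in ends F' (ends x).1 (ends x).2.
  apply/existsP; exists x; rewrite xF'; by case: (ends x) => a b /=; rewrite eqxx.
have -> : connect (adj_in ends F') u (ends x).2 = connect (adj_in ends F') u (ends x).1.
  apply/idP/idP => h; apply: connect_trans h _; apply: connect1 => //.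
  by rewrite adj_sym.
rewrite (cs x xF'); by case: (s _); case: (s _); case: connect.
Qed.

Definition badset (V E : finType) (ends : E -> V * V) (neg : E -> bool) (s : V -> bool)
  (F : {set E}) := [set x in F | neg x != (s (ends x).1 != s (ends x).2)].

Definition upd (V : finType) (s : V -> bool) (v : V) (b : bool) :=
  fun z => if z == v then b else s z.

Lemma greedy_step (V E : finType) (ends : E -> V * V) (neg : E -> bool) (s : V -> bool) (v : V) :
  exists b, #|[set x | (inc ends x v != 0) &&
       (neg x != (upd s v b (ends x).1 != upd s v b (ends x).2))]| <= (deg ends v)./2.
Proof.
set A := fun b => [set x | (inc ends x v != 0) &&
       (neg x != (upd s v b (ends x).1 != upd s v b (ends x).2))].
have tot : #|A true| + #|A false| <= deg ends v.
  rewrite /deg /deg_in -!sum1_card [X in X + _]big_mkcond [X in _ + X]big_mkcond -big_split /=.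
  rewrite [X in _ <= X]big_mkcond /=.
  apply: leq_sum => x _; rewrite !inE /upd /inc.
  case: ((ends x).1 == v); case: ((ends x).2 == v) => //=;
  by case: (neg x); case: (s (ends x).1); case: (s (ends x).2).
case: (leqP #|A true| #|A false|) => h.
  exists true; rewrite -/(A true) geq_half_double -addnn.
  by apply: leq_trans tot; rewrite leq_add2l.
exists false; rewrite -/(A false) geq_half_double -addnn.
by apply: leq_trans tot; rewrite leq_add2r ltnW.
Qed.

Lemma greedy (V E : finType) (ends : E -> V * V) (neg : E -> bool) (X : {set V}) (s0 : V -> bool) :
  cons_on ends neg s0 (edges_avoiding ends X) ->
  forall Y : {set V}, exists s,
    #|badset ends neg s (edges_avoiding ends (X :\: Y))| <= \sum_(v in Y) (deg ends v)./2.
Proof.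
move=> c0 Y; move: {2}#|Y| (leqnn #|Y|) => n; elim: n Y => [|n IH] Y.
  rewrite leqn0 cards_eq0 => /eqP ->; exists s0; rewrite setD0 big_set0 leqn0 cards_eq0.
  apply/eqP/setP => x; rewrite inE [RHS]inE; apply/negP => /andP [xin].
  by rewrite (c0 x xin) eqxx.
case: (set_0Vmem Y) => [-> _|[v vY] szY].
  exists s0; rewrite setD0 big_set0 leqn0 cards_eq0.
  apply/eqP/setP => x; rewrite inE [RHS]inE; apply/negP => /andP [xin].
  by rewrite (c0 x xin) eqxx.
have szY' : #|Y :\ v| <= n by move: szY; rewrite (cardsD1 v Y) vY.
have [s' h'] := IH _ szY'.
have [b hb] := greedy_step ends neg s' v.
exists (upd s' v b).
set A := [set x | _ && _] in hb.
have sub : badset ends neg (upd s' v b) (edges_avoiding ends (X :\: Y)) \subset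
           badset ends neg s' (edges_avoiding ends (X :\: (Y :\ v))) :|: A.
  apply/subsetP => x; rewrite !inE => /andP [/andP [h1 h2] hbad].
  case: (boolP (inc ends x v != 0)) => [nz | ]; first by rewrite ?nz hbad orbT.
  rewrite negbK /inc addn_eq0 !eqb0 => /andP [n1 n2].
  move: hbad; rewrite /upd (negbTE n1) (negbTE n2) => -> /=.
  move: h1 h2; rewrite ?inE.
  by move=> -> ->.
apply: leq_trans (subset_leq_card sub) _.
apply: leq_trans (leq_card_setU _ _) _.
rewrite (bigD1 v) //= [X in X <= _]addnC; apply: (leq_add hb).
apply: (leq_trans h'); apply: eq_leq; apply: eq_bigl => z; by rewrite !inE andbC.
Qed.

Lemma top_sum (r t : seq nat) : sorted geq r -> subseq t r ->
  \sum_(x <- t) x./2 <= \sum_(x <- take (size t) r) x./2.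
Proof.
elim: r t => [|x r IH] t.
  by move=> _; rewrite subseq0 => /eqP ->.
move=> srt; have srt' : sorted geq r := path_sorted srt.
have allx : all (geq x) r by apply: order_path_min srt => a b c /= h1 h2; apply: leq_trans h2 h1.
case: t => [|y t] //= .
case: eqP => [-> sub | _ sub].
  by rewrite !big_cons leq_add2l; apply: IH.
apply: leq_trans (IH _ srt' sub) _ => /=.
rewrite big_cons.
case: (ltnP (size t) (size r)) => hs.
  rewrite (take_nth 0 hs) -cats1 big_cat /= big_seq1 addnC leq_add2r.
  apply: half_leq; exact: (allP allx _ (mem_nth 0 hs)).
by rewrite take_oversize ?(leq_trans hs) // take_oversize // leq_addl.
Qed.

Lemma take_sum (r : seq nat) m :
  \sum_(i < m) (nth 0 r i)./2 = \sum_(x <- take m r) x./2.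
Proof.
elim: r m => [|x r IH] [|m].
- by rewrite big_ord0 big_nil.
- by rewrite big1 ?big_nil // => i _; rewrite nth_nil.
- by rewrite big_ord0 big_nil.
- by rewrite big_ord_recl /= big_cons IH.
Qed.

Lemma take_mono (r : seq nat) k m : k <= m ->
  \sum_(x <- take k r) x./2 <= \sum_(x <- take m r) x./2.
Proof.
move=> km; rewrite -(take_takel r km).
set u := take m r; rewrite -{2}(cat_take_drop k u) big_cat /=.
exact: leq_addr.
Qed.

Lemma enum_sub (V : finType) (X : {set V}) : subseq (enum X) (enum V).
Proof.
rewrite -!deprecated_filter_index_enum.
have -> : [seq x <- index_enum V | x \in V] = index_enum V.
  by apply/all_filterP/allP.
exact: filter_subseq.
Qed.

Lemma min_le_seq (I : eqType) (r : seq I) (P : pred I) (F : I -> nat) idx j :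
  j \in r -> P j -> \big[minn/idx]_(i <- r | P i) F i <= F j.
Proof.
elim: r => //= i r IH; rewrite inE big_cons => /orP [/eqP <- -> | jr Pj].
  exact: geq_minl.
case: (P i); last exact: IH.
exact: leq_trans (geq_minr _ _) (IH jr Pj).
Qed.

Lemma geq_tot : total geq. Proof. by move=> a b /=; rewrite orbC leq_total. Qed.
Lemma geq_tr : transitive geq. Proof. by move=> b a c /= h1 h2; apply: leq_trans h2 h1. Qed.

Theorem proposition2 (V E : finType) (ends : E -> V * V) (neg : E -> bool) :
  frustration_index ends neg <=
  \sum_(i < frustration_number ends neg)
     (nth 0 (degree_seq ends) i)./2.
Proof.
have bT : balanced_on ends neg (edges_avoiding ends setT).
  by apply: (@cons_balanced _ _ ends neg (fun _ => false)) => x; rewrite !inE.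
have [X [bX szX]] : exists X, balanced_on ends neg (edges_avoiding ends X) /\
    #|X| <= frustration_number ends neg.
  rewrite /frustration_number; elim/big_rec: _ => [|Y x bY [X [bX hX]]].
    by exists setT; rewrite cardsT.
  case: (leqP #|Y| x) => h.
    by exists Y.
  by exists X.
have [s0 c0] := harary bX.
have [s hs] := greedy c0 X.
rewrite setDv in hs.
set S := badset ends neg s (edges_avoiding ends set0) in hs.
have bS : balanced_on ends neg (~: S).
  apply: (@cons_balanced _ _ ends neg s) => x; rewrite !inE negb_and negbK.
  by case/orP => [| /eqP //].
have lS : frustration_index ends neg <= #|S|.
  exact: (@min_le_seq _ _ (fun S0 => balanced_on ends neg (~: S0)) (fun S0 => #|S0|) _ _ (mem_index_enum S) bS).
apply: (leq_trans lS); apply: (leq_trans hs).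
rewrite take_sum; apply: leq_trans (take_mono _ szX).
rewrite -big_enum.
have -> : \sum_(v <- enum X) (deg ends v)./2 = \sum_(d <- map (deg ends) (enum X)) d./2.
  by rewrite big_map.
set t0 := map (deg ends) (enum X).
have pe : perm_eq (sort geq t0) t0 by rewrite perm_sort.
rewrite -(perm_big _ pe).
have -> : #|X| = size (sort geq t0) by rewrite size_sort size_map -cardE.
apply: top_sum; first exact: sort_sorted geq_tot _.
apply: subseq_sort geq_tot geq_tr _ _ _.
exact: map_subseq (enum_sub X).
Qed.
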